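(* Let $u$ be a smooth absolute $E_1$-minimizer on a domain of the $xy$-plane where $D\neq0$. Then $$\alpha\Big(N+\tfrac13\alpha^{-1}HN^{\perp}\Big)\theta+N^{\perp}(\alpha)=-\alpha^2 .$$
   Context: Heisenberg group $H_1$ with contact form $\Theta=dt+x\,dy-y\,dx$; graph $t=u(x,y)$, $D=[(u_x-y)^2+(u_y+x)^2]^{1/2}$, $\cos\theta=(u_x-y)/D$, $\sin\theta=(u_y+x)/D$, $\alpha=-1/D$, $H=D^{-3}\{(u_y+x)^2u_{xx}-2(u_y+x)(u_x-y)u_{xy}+(u_x-y)^2u_{yy}\}$ (the $p$-mean curvature), $N^{\perp}=\sin\theta\,\partial_x-\cos\theta\,\partial_y$, $N=\cos\theta\,\partial_x+\sin\theta\,\partial_y$. Absolute $E_1$-minimizer: $-N^{\perp}\alpha+\frac12\alpha^2+\frac16H^2=0$ on the nonsingular domain (this is $e_1\alpha+\frac12\alpha^2+\frac16H^2=0$, $e_1$ acting as $-N^\perp$). *)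

(* Defs.v *)
From Stdlib Require Import Reals.
From Coquelicot Require Import Coquelicot.
Open Scope R_scope.

Definition dx (f : R -> R -> R) : R -> R -> R :=
  fun x y => Derive (fun t => f t y) x.
Definition dy (f : R -> R -> R) : R -> R -> R :=
  fun x y => Derive (fun t => f x t) y.

Definition open_dom (Om : R -> R -> Prop) : Prop :=
  open (fun z : R * R => Om (fst z) (snd z)).

Fixpoint Ck (k : nat) (Om : R -> R -> Prop) (f : R -> R -> R) : Prop :=
  match k with
  | O => forall x y, Om x y ->
           continuous (fun z : R * R => f (fst z) (snd z)) (x, y)
  | S k' =>
      (forall x y, Om x y ->
         continuous (fun z : R * R => f (fst z) (snd z)) (x, y)
         /\ ex_derive (fun t => f t y) x /\ ex_derive (fun t => f x t) y)
      /\ Ck k' Om (dx f) /\ Ck k' Om (dy f)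
  end.

Definition smooth_on (Om : R -> R -> Prop) (f : R -> R -> R) : Prop :=
  forall k, Ck k Om f.

(* Quantities attached to the graph t = u(x,y) in H_1. *)
Definition Dfun (u : R -> R -> R) : R -> R -> R :=
  fun x y => sqrt ((dx u x y - y) ^ 2 + (dy u x y + x) ^ 2).
Definition cos_th (u : R -> R -> R) : R -> R -> R :=
  fun x y => (dx u x y - y) / Dfun u x y.
Definition sin_th (u : R -> R -> R) : R -> R -> R :=
  fun x y => (dy u x y + x) / Dfun u x y.
Definition alpha (u : R -> R -> R) : R -> R -> R :=
  fun x y => - / Dfun u x y.
Definition Hcurv (u : R -> R -> R) : R -> R -> R :=
  fun x y =>
    / (Dfun u x y ^ 3) *
    ((dy u x y + x) ^ 2 * dx (dx u) x y
     - 2 * (dy u x y + x) * (dx u x y - y) * dx (dy u) x y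
     + (dx u x y - y) ^ 2 * dy (dy u) x y).

Definition Nop (u : R -> R -> R) (f : R -> R -> R) : R -> R -> R :=
  fun x y => cos_th u x y * dx f x y + sin_th u x y * dy f x y.
Definition Nperp (u : R -> R -> R) (f : R -> R -> R) : R -> R -> R :=
  fun x y => sin_th u x y * dx f x y - cos_th u x y * dy f x y.

Definition abs_E1_minimizer (Om : R -> R -> Prop) (u : R -> R -> R) : Prop :=
  forall x y, Om x y ->
    - Nperp u (alpha u) x y + / 2 * alpha u x y ^ 2
      + / 6 * Hcurv u x y ^ 2 = 0.

(* Main.v *)
Require Import Defs.
From Stdlib Require Import Reals Lra.
From Coquelicot Require Import Coquelicot.
Open Scope R_scope.

Lemma dtheta (g A B : R -> R) t0 :
  ex_derive g t0 -> ex_derive A t0 -> ex_derive B t0 ->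
  A t0 ^ 2 + B t0 ^ 2 <> 0 ->
  locally t0 (fun t => cos (g t) = A t / sqrt (A t ^ 2 + B t ^ 2) /\
                       sin (g t) = B t / sqrt (A t ^ 2 + B t ^ 2)) ->
  Derive g t0 = (A t0 * Derive B t0 - B t0 * Derive A t0)
                / (sqrt (A t0 ^ 2 + B t0 ^ 2) * sqrt (A t0 ^ 2 + B t0 ^ 2)).
Proof.
  intros Hg HA HB HS Hloc.
  assert (HSp : 0 < A t0 ^ 2 + B t0 ^ 2) by
    (assert (0 <= A t0 ^2 + B t0 ^2) by nra; lra).
  assert (HDp : 0 < sqrt (A t0 ^ 2 + B t0 ^ 2)) by (apply sqrt_lt_R0; lra).
  assert (Hc0 : cos (g t0) = A t0 / sqrt (A t0 ^ 2 + B t0 ^ 2) /\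
                sin (g t0) = B t0 / sqrt (A t0 ^ 2 + B t0 ^ 2))
    by (apply locally_singleton in Hloc; exact Hloc).
  destruct Hc0 as [Hc Hs].
  set (D := sqrt (A t0 ^ 2 + B t0 ^ 2)) in *.
  assert (E1 : is_derive (fun t => cos (g t)) t0 (- sin (g t0) * Derive g t0)).
  { auto_derive; [repeat split; auto | rewrite Rmult_1_l, Rmult_comm; reflexivity]. }
  assert (E2 : is_derive (fun t => sin (g t)) t0 (cos (g t0) * Derive g t0)).
  { auto_derive; [repeat split; auto | rewrite Rmult_1_l, Rmult_comm; reflexivity]. }
  assert (F1 : is_derive (fun t => A t / sqrt (A t ^ 2 + B t ^ 2)) t0
     (Derive A t0 / D - A t0 * (A t0 * Derive A t0 + B t0 * Derive B t0) / (D * D * D))).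
  { auto_derive.
    - repeat split; auto; try replace (A t0 * (A t0 * 1) + B t0 * (B t0 * 1)) with (A t0 ^2 + B t0 ^2) by ring; fold D; first [lra | apply Rgt_not_eq; lra].
    - replace (A t0 * (A t0 * 1) + B t0 * (B t0 * 1)) with (A t0 ^2 + B t0 ^2) by ring; fold D; change (fun x : R => A x) with A; change (fun x : R => B x) with B.
      field; lra. }
  assert (F2 : is_derive (fun t => B t / sqrt (A t ^ 2 + B t ^ 2)) t0
     (Derive B t0 / D - B t0 * (A t0 * Derive A t0 + B t0 * Derive B t0) / (D * D * D))).
  { auto_derive.
    - repeat split; auto; try replace (A t0 * (A t0 * 1) + B t0 * (B t0 * 1)) with (A t0 ^2 + B t0 ^2) by ring; fold D; first [lra | apply Rgt_not_eq; lra].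
    - replace (A t0 * (A t0 * 1) + B t0 * (B t0 * 1)) with (A t0 ^2 + B t0 ^2) by ring; fold D; change (fun x : R => A x) with A; change (fun x : R => B x) with B.
      field; lra. }
  assert (G1 : is_derive (fun t => A t / sqrt (A t ^ 2 + B t ^ 2)) t0 (- sin (g t0) * Derive g t0)).
  { apply is_derive_ext_loc with (2 := E1).
    apply filter_imp with (2 := Hloc). intros t [H1 _]. exact H1. }
  assert (G2 : is_derive (fun t => B t / sqrt (A t ^ 2 + B t ^ 2)) t0 (cos (g t0) * Derive g t0)).
  { apply is_derive_ext_loc with (2 := E2).
    apply filter_imp with (2 := Hloc). intros t [_ H2]. exact H2. }
  apply is_derive_unique in F1, F2, G1, G2.
  rewrite G1 in F1. rewrite G2 in F2.
  rewrite Hc in F2. rewrite Hs in F1.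
  set (gp := Derive g t0) in *.
  assert (Hcs : cos (g t0) ^ 2 + sin (g t0) ^ 2 = 1) by (rewrite <- (sin2_cos2 (g t0)); unfold Rsqr; ring).
  rewrite Hc, Hs in Hcs.
  replace gp with ((A t0 / D) * (A t0 / D * gp) + (B t0 / D) * (B t0 / D * gp)).
  2: { transitivity (gp * ((A t0 / D) ^ 2 + (B t0 / D) ^ 2)); [ring | rewrite Hcs; ring]. }
  rewrite F2.
  replace (B t0 / D * gp) with (- (- (B t0 / D) * gp)) by ring.
  rewrite F1. field. lra.
Qed.

Lemma dalpha (A B : R -> R) t0 :
  ex_derive A t0 -> ex_derive B t0 -> A t0 ^ 2 + B t0 ^ 2 <> 0 ->
  Derive (fun t => - / sqrt (A t ^ 2 + B t ^ 2)) t0 =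
  (A t0 * Derive A t0 + B t0 * Derive B t0) /
   (sqrt (A t0 ^ 2 + B t0 ^ 2) * sqrt (A t0 ^ 2 + B t0 ^ 2) * sqrt (A t0 ^ 2 + B t0 ^ 2)).
Proof.
  intros HA HB HS.
  assert (HSp : 0 < A t0 ^ 2 + B t0 ^ 2) by
    (assert (0 <= A t0 ^2 + B t0 ^2) by nra; lra).
  assert (HDp : 0 < sqrt (A t0 ^ 2 + B t0 ^ 2)) by (apply sqrt_lt_R0; lra).
  apply is_derive_unique.
  set (D := sqrt (A t0 ^ 2 + B t0 ^ 2)) in *.
  auto_derive.
  - repeat split; auto; try replace (A t0 * (A t0 * 1) + B t0 * (B t0 * 1)) with (A t0 ^2 + B t0 ^2) by ring; fold D; first [lra | apply Rgt_not_eq; lra].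
  - replace (A t0 * (A t0 * 1) + B t0 * (B t0 * 1)) with (A t0 ^2 + B t0 ^2) by ring; fold D; change (fun x : R => A x) with A; change (fun x : R => B x) with B.
    field; lra.
Qed.
Lemma alg a b D p q r tx ty ax ay :
 D <> 0 -> D*D = a^2+b^2 ->
 tx = (a*(q+1) - b*p)/(D*D) -> ty = (a*r - b*(q-1))/(D*D) ->
 ax = (a*p + b*(q+1))/(D*D*D) -> ay = (a*(q-1) + b*r)/(D*D*D) ->
 - ((b/D)*ax - (a/D)*ay) + /2*(-/D)^2
   + /6*(/(D^3) * ((b)^2*p - 2*(b)*(a)*q + (a)^2*r))^2 = 0 ->
 (-/D) * (((a/D)*tx + (b/D)*ty)
   + /3 * /(-/D) * (/(D^3) * ((b)^2*p - 2*(b)*(a)*q + (a)^2*r)) * ((b/D)*tx - (a/D)*ty))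
   + ((b/D)*ax - (a/D)*ay) = -((-/D)^2).
Proof.
  intros HD HDD Htx Hty Hax Hay Hmin.
  set (H := /(D^3) * ((b)^2*p - 2*(b)*(a)*q + (a)^2*r)) in *.
  set (al := -/D) in *.
  set (Nt := (a/D)*tx + (b/D)*ty).
  set (NPa := (b/D)*ax - (a/D)*ay) in *.
  assert (E1 : (b/D)*tx - (a/D)*ty = - H).
  { unfold H; rewrite Htx, Hty; field; auto. }
  assert (E2 : NPa = al * Nt + 2 * al^2).
  { unfold NPa, Nt, al. rewrite Htx, Hty, Hax, Hay.
    replace (2 * (-/D)^2) with (2 * (a^2+b^2) / (D*D*D*D)).
    - field; auto.
    - rewrite <- HDD; field; auto. }
  assert (Hal : al <> 0) by (unfold al; apply Ropp_neq_0_compat, Rinv_neq_0_compat; auto).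
  rewrite E1.
  replace (al * (Nt + / 3 * / al * H * - H)) with (al * Nt - H^2/3) by (field; auto).
  nra.
Qed.

Theorem proposition3p1 (Om : R -> R -> Prop) (u theta : R -> R -> R) :
  open_dom Om ->
  smooth_on Om u ->
  (forall x y, Om x y -> Dfun u x y <> 0) ->
  abs_E1_minimizer Om u ->
  Ck 1 Om theta ->
  (forall x y, Om x y ->
     cos (theta x y) = cos_th u x y /\ sin (theta x y) = sin_th u x y) ->
  forall x y, Om x y ->
    alpha u x y * (Nop u theta x y
                   + / 3 * / alpha u x y * Hcurv u x y * Nperp u theta x y)
    + Nperp u (alpha u) x y
    = - (alpha u x y ^ 2).
Proof.
  intros Hop Hsm HD Hmin Hth Hcs x y Hxy.
  assert (Hloc : locally_2d Om x y).
  { apply locally_2d_locally. apply (Hop (x, y)). exact Hxy. }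
  assert (Hlx := locally_2d_1d_const_y _ _ _ Hloc).
  assert (Hly := locally_2d_1d_const_x _ _ _ Hloc).
  destruct (Hsm 2%nat) as [Hu1 [[Hdx1 [Hdxx Hdyx]] [Hdy1 [Hdxy Hdyy]]]].
  destruct Hth as [Ht1 _].
  destruct (Ht1 x y Hxy) as [_ [Htx Hty]].
  destruct (Hu1 x y Hxy) as [_ [Hux Huy]].
  destruct (Hdx1 x y Hxy) as [_ [Huxx Huxy]].
  destruct (Hdy1 x y Hxy) as [_ [Huyx Huyy]].
  assert (HS : (dx u x y - y) ^ 2 + (dy u x y + x) ^ 2 <> 0).
  { intro E. apply (HD x y Hxy). unfold Dfun. rewrite E. apply sqrt_0. }
  assert (Hsym : dy (dx u) x y = dx (dy u) x y).
  { symmetry. unfold dx, dy.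
    apply (Schwarz u x y).
    - destruct Hloc as [d Hd]. exists d. intros u0 v H1 H2.
      specialize (Hd u0 v H1 H2).
      destruct (Hu1 u0 v Hd) as [_ [E1 E2]].
      destruct (Hdx1 u0 v Hd) as [_ [_ E4]].
      destruct (Hdy1 u0 v Hd) as [_ [E3 _]].
      repeat split; assumption.
    - apply continuity_2d_pt_filterlim. apply (Hdxy x y Hxy).
    - apply continuity_2d_pt_filterlim. apply (Hdyx x y Hxy). }
  assert (Ex : ex_derive (fun t => dx u t y - y) x) by (auto_derive; auto).
  assert (Ex2 : ex_derive (fun t => dy u t y + t) x) by (auto_derive; auto).
  assert (Ey : ex_derive (fun t => dx u x t - t) y) by (auto_derive; auto).
  assert (Ey2 : ex_derive (fun t => dy u x t + x) y) by (auto_derive; auto).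
  assert (DAx : Derive (fun t => dx u t y - y) x = dx (dx u) x y).
  { rewrite Derive_minus; auto. rewrite Derive_const. change (dx (dx u) x y) with (Derive (fun t => dx u t y) x). ring.
    apply ex_derive_const. }
  assert (DBx : Derive (fun t => dy u t y + t) x = dx (dy u) x y + 1).
  { rewrite Derive_plus; auto. rewrite Derive_id. change (dx (dy u) x y) with (Derive (fun t => dy u t y) x). reflexivity.
    apply ex_derive_id. }
  assert (DAy : Derive (fun t => dx u x t - t) y = dy (dx u) x y - 1).
  { rewrite Derive_minus; auto. rewrite Derive_id. change (dy (dx u) x y) with (Derive (fun t => dx u x t) y). reflexivity.
    apply ex_derive_id. }
  assert (DBy : Derive (fun t => dy u x t + x) y = dy (dy u) x y).
  { rewrite Derive_plus; auto. rewrite Derive_const. change (dy (dy u) x y) with (Derive (fun t => dy u x t) y). rewrite Rplus_0_r. reflexivity.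
    apply ex_derive_const. }
  assert (Ktx : dx theta x y = ((dx u x y - y) * (dx (dy u) x y + 1)
                   - (dy u x y + x) * dx (dx u) x y) / (Dfun u x y * Dfun u x y)).
  { unfold dx at 1.
    rewrite (dtheta (fun t => theta t y) (fun t => dx u t y - y) (fun t => dy u t y + t) x);
      auto.
    - rewrite DAx, DBx. reflexivity.
    - apply filter_imp with (2 := Hlx). intros t Ht. exact (Hcs t y Ht). }
  assert (Kty : dy theta x y = ((dx u x y - y) * dy (dy u) x y
                   - (dy u x y + x) * (dx (dy u) x y - 1)) / (Dfun u x y * Dfun u x y)).
  { unfold dy at 1.
    rewrite (dtheta (fun t => theta x t) (fun t => dx u x t - t) (fun t => dy u x t + x) y);
      auto.
    - rewrite DAy, DBy, Hsym. reflexivity.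
    - apply filter_imp with (2 := Hly). intros t Ht. exact (Hcs x t Ht). }
  assert (Kax : dx (alpha u) x y = ((dx u x y - y) * dx (dx u) x y
                   + (dy u x y + x) * (dx (dy u) x y + 1))
                   / (Dfun u x y * Dfun u x y * Dfun u x y)).
  { unfold dx at 1.
    etransitivity. { apply (dalpha (fun t => dx u t y - y) (fun t => dy u t y + t) x); auto. }
    rewrite DAx, DBx. reflexivity. }
  assert (Kay : dy (alpha u) x y = ((dx u x y - y) * (dx (dy u) x y - 1)
                   + (dy u x y + x) * dy (dy u) x y)
                   / (Dfun u x y * Dfun u x y * Dfun u x y)).
  { unfold dy at 1.
    etransitivity. { apply (dalpha (fun t => dx u x t - t) (fun t => dy u x t + x) y); auto. }
    rewrite DAy, DBy, Hsym. reflexivity. }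
  specialize (Hmin x y Hxy).
  unfold Nperp, Nop, cos_th, sin_th, alpha, Hcurv in *.
  apply (alg (dx u x y - y) (dy u x y + x) (Dfun u x y) (dx (dx u) x y) (dx (dy u) x y)
           (dy (dy u) x y)); auto.
  unfold Dfun. apply sqrt_sqrt.
  assert (0 <= (dx u x y - y) ^ 2) by apply pow2_ge_0.
  assert (0 <= (dy u x y + x) ^ 2) by apply pow2_ge_0. lra.
Qed.
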